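(* Let $M := \langle X \mid R\rangle$ where $R = \{(e,f)\}$ for some $e,f \in \langle X\rangle$, and let $d := ||e|-|f|| \in \mathbb{N}$. (1) If $d = 0$, then $M$ is half-factorial. (2) If $d \neq 0$, then $\Delta(M) = \{d\}$, and $\mathsf{L}_M(a)$ is an arithmetic progression with difference $d$ for all $a \in \langle X\rangle$.
   Context: For a set $X$, $\langle X\rangle$ is the free monoid on $X$ (identity $1$); $M=\langle X\mid R\rangle$ is the monoid presented by generators $X$ and relations $R\subseteq\langle X\rangle\times\langle X\rangle$. For $a,b\in\langle X\rangle$, $a=_M b$ means they have equal images in $M$; $|a|$ is word length. $\mathsf{L}_M(a) := \{|b| : b\in\langle X\rangle,\ b=_M a\}$ and $\mathcal{L}(M) := \{\mathsf{L}_M(a) : a\in\langle X\rangle\}$. $M$ is half-factorial if $\mathsf{L}_M(a) = \{|a|\}$ for all $a$. For $L\subseteq\mathbb{N}$, $d\in\mathbb{N}^+$ is a distance of $L$ if $[k,k+d]\cap L = \{k,k+d\}$ for some $k\in L$ (where $[n,m]$ is the set of integers between $n$ and $m$); $\Delta(L)$ is the set of distances of $L$, and $\Delta(M) := \bigcup_{L\in\mathcal{L}(M)}\Delta(L)$. (A singleton counts as an arithmetic progression with any difference.) *)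

(* Defs.v *)
(* Free monoid <X> = list X, concatenation ++, identity nil. *)
From Stdlib Require Import List Arith Lia.
Import ListNotations.

Inductive step {X : Type} (e f : list X) : list X -> list X -> Prop :=
| step_ef : forall u v, step e f (u ++ e ++ v) (u ++ f ++ v)
| step_fe : forall u v, step e f (u ++ f ++ v) (u ++ e ++ v).

(* a =_M b for M = <X | {(e,f)}>: the congruence generated by (e,f), i.e.
   the reflexive-transitive closure of the (symmetric) one-step relation. *)
Inductive eqM {X : Type} (e f : list X) : list X -> list X -> Prop :=
| eqM_refl : forall a, eqM e f a a
| eqM_step : forall a b c, step e f a b -> eqM e f b c -> eqM e f a c.

Definition Lset {X : Type} (e f : list X) (a : list X) : nat -> Prop :=
  fun n => exists b, eqM e f b a /\ length b = n.

Definition half_factorial {X : Type} (e f : list X) : Prop :=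
  forall a n, Lset e f a n <-> n = length a.

Definition is_distance (L : nat -> Prop) (d : nat) : Prop :=
  0 < d /\ exists k, L k /\ L (k + d) /\
    (forall j, k < j < k + d -> ~ L j).

Definition DeltaM {X : Type} (e f : list X) : nat -> Prop :=
  fun d => exists a, is_distance (Lset e f a) d.

(* L is an arithmetic progression with difference d:
   L = { m + k d : k ∈ N, k <= l } for some m and some l ∈ N ∪ {∞}
   (ub = None encodes an unbounded progression). *)
Definition is_AP (L : nat -> Prop) (d : nat) : Prop :=
  exists (m : nat) (ub : option nat), forall n,
    L n <-> exists k, n = m + k * d /\
      match ub with None => True | Some l => k <= l end.

(* Main.v *)
Require Import Defs.
From Stdlib Require Import List Arith.
From Stdlib Require Import Lia Classical.
Import ListNotations.

Section S.
Context {X : Type} (e f : list X).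
Let dd := length e - length f + (length f - length e).

Lemma step_len x y : step e f x y ->
  length y = length x + dd \/ length x = length y + dd.
Proof. intros []; rewrite !length_app; unfold dd; lia. Qed.

Lemma step_mod x y : step e f x y -> length x mod dd = length y mod dd.
Proof.
  intros H; destruct (step_len _ _ H) as [H1|H1]; rewrite H1.
  - replace (length x + dd) with (length x + 1*dd) by lia.
    now rewrite Nat.Div0.mod_add.
  - replace (length y + dd) with (length y + 1*dd) by lia.
    now rewrite Nat.Div0.mod_add.
Qed.

Lemma eqM_mod x y : eqM e f x y -> length x mod dd = length y mod dd.
Proof. induction 1; auto. rewrite (step_mod _ _ H); auto. Qed.

Lemma eqM_trans x y z : eqM e f x y -> eqM e f y z -> eqM e f x z.
Proof. induction 1; intros; auto. econstructor; eauto. Qed.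

Lemma step_sym x y : step e f x y -> step e f y x.
Proof. intros []; constructor. Qed.

Lemma eqM_sym x y : eqM e f x y -> eqM e f y x.
Proof.
  induction 1. constructor.
  eapply eqM_trans; eauto. econstructor. apply step_sym; eauto. constructor.
Qed.

Lemma close a b : dd <> 0 -> a mod dd = b mod dd -> a < b + dd -> b < a + dd -> a = b.
Proof.
  intros Hd Hm H1 H2.
  pose proof (Nat.div_mod_eq a dd). pose proof (Nat.div_mod_eq b dd).
  rewrite Hm in H. remember (a/dd) as qa. remember (b/dd) as qb.
  assert (qa = qb) by nia. subst; lia.
Qed.

Lemma conv b c : dd <> 0 -> eqM e f b c -> forall n,
  (length b <= n <= length c \/ length c <= n <= length b) ->
  n mod dd = length c mod dd -> exists w, eqM e f w c /\ length w = n.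
Proof.
  intros Hd H. induction H as [a|a b c Hs Hm IH]; intros n Hn Hmod.
  - exists a; split; [constructor|lia].
  - destruct (Nat.eq_dec n (length a)).
    + exists a; split; [econstructor; eauto|auto].
    + pose proof (step_len _ _ Hs).
      assert (length b <= n <= length c \/ length c <= n <= length b
              \/ (n < length a + dd /\ length a < n + dd)) as [A|[A|A]] by lia.
      1,2: apply IH; auto.
      exfalso. apply n0. apply close; auto.
      rewrite Hmod. rewrite (step_mod _ _ Hs). symmetry. apply eqM_mod; auto.
      lia. lia.
Qed.

Lemma L_mod a n : Lset e f a n -> n mod dd = length a mod dd.
Proof. intros [b [H1 H2]]; subst; apply eqM_mod; auto. Qed.

Lemma L_conv a n1 n2 n : dd <> 0 -> Lset e f a n1 -> Lset e f a n2 -> n1 <= n <= n2 ->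
  n mod dd = length a mod dd -> Lset e f a n.
Proof.
  intros Hd [b1 [B1 L1]] [b2 [B2 L2]] Hn Hm.
  destruct (conv b1 b2 Hd (eqM_trans _ _ _ B1 (eqM_sym _ _ B2)) n) as [w [W1 W2]].
  lia. rewrite Hm; symmetry; apply eqM_mod; auto.
  exists w; split; auto. eapply eqM_trans; eauto.
Qed.

End S.

Lemma min_ex (P : nat -> Prop) n : P n -> exists m, P m /\ forall k, P k -> m <= k.
Proof.
  induction n as [n IH] using lt_wf_ind. intros Hn.
  destruct (classic (exists k, k < n /\ P k)) as [[k [Hk Pk]]|H].
  - eapply IH; eauto.
  - exists n; split; auto. intros k Pk.
    destruct (le_lt_dec n k); auto. exfalso; eauto.
Qed.

Lemma max_ex (P : nat -> Prop) n B : P n -> (forall x, P x -> x <= B) ->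
  exists M, P M /\ forall k, P k -> k <= M.
Proof.
  intros Hn HB.
  destruct (min_ex (fun y => y <= B /\ P (B - y)) (B - n)) as [y [[Y1 Y2] Y3]].
  { split. lia. replace (B - (B - n)) with n; auto. specialize (HB _ Hn); lia. }
  exists (B - y); split; auto. intros k Pk.
  specialize (Y3 (B - k)). specialize (HB _ Pk).
  assert (y <= B - k). apply Y3. split. lia. replace (B - (B - k)) with k by lia; auto.
  lia.
Qed.

Theorem proposition4p1 (X : Type) (e f : list X) :
  let d := (length e - length f) + (length f - length e) in
  (d = 0 -> half_factorial e f) /\
  (d <> 0 ->
     (forall n, DeltaM e f n <-> n = d) /\
     (forall a : list X, is_AP (Lset e f a) d)).
Proof.
  intros d. split.
  - intros Hd a n. split.
    + intros [b [Hb Hl]]. subst n. clear -Hd Hb. induction Hb; auto.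
      rewrite <- IHHb. destruct (step_len _ _ _ _ H); unfold d in Hd; lia.
    + intros ->. exists a; split; [constructor|auto].
  - intros Hd. split.
    + intros n; split.
      * intros [a [Hn [k [Lk [Lkn Hb]]]]].
        pose proof (L_mod _ _ _ _ Lk) as M1. pose proof (L_mod _ _ _ _ Lkn) as M2.
        destruct (lt_eq_lt_dec n d) as [[Hlt|Heq]|Hgt]; auto; exfalso.
        -- assert (k = k + n). apply (close e f); auto. rewrite M1, M2; reflexivity. lia. lia. lia.
        -- apply (Hb (k + d)). lia.
           apply (L_conv e f a k (k+n)); auto. lia.
           fold d. replace (k + d) with (k + 1 * d) by lia. rewrite Nat.Div0.mod_add. auto.
      * intros ->. exists e. split; [lia|].
        assert (Le : Lset e f e (length e)) by (exists e; split; [constructor|auto]).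
        assert (Lf : Lset e f e (length f)).
        { exists f; split; auto. econstructor. pose proof (step_fe e f [] []) as S0; rewrite !app_nil_r in S0; simpl in S0; exact S0. constructor. }
        exists (Nat.min (length e) (length f)). split; [|split].
        -- destruct (Nat.min_spec (length e) (length f)) as [[_ ->]|[_ ->]]; auto.
        -- replace (Nat.min (length e) (length f) + d) with (Nat.max (length e) (length f)) by (unfold d; lia).
           destruct (Nat.max_spec (length e) (length f)) as [[_ ->]|[_ ->]]; auto.
        -- intros j Hj Lj. pose proof (L_mod _ _ _ _ Lj) as Mj.
           pose proof (L_mod _ _ _ _ Lf) as Mf.
           destruct (Nat.min_spec (length e) (length f)) as [[_ Q]|[_ Q]]; rewrite Q in Hj.
           ++ assert (j = length e). apply (close e f); auto. fold d; unfold d in Hj; lia. fold d; unfold d in Hj; lia. lia.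
           ++ assert (j = length f). apply (close e f); auto. rewrite Mj, Mf; reflexivity. fold d; unfold d in Hj; lia. fold d; unfold d in Hj; lia. lia.
    + intros a.
      assert (La : Lset e f a (length a)) by (exists a; split; [constructor|auto]).
      destruct (min_ex _ _ La) as [m [Lm Hm]].
      pose proof (L_mod _ _ _ _ Lm) as Mm; fold d in Mm.
      pose proof (Nat.div_mod_eq m d) as Em.
      exists m.
      destruct (classic (exists B, forall x, Lset e f a x -> x <= B)) as [[B HB]|HB].
      * destruct (max_ex _ _ B Lm HB) as [M [LM HM]].
        pose proof (L_mod _ _ _ _ LM) as MM; fold d in MM.
        pose proof (Nat.div_mod_eq M d) as EM.
        assert (m <= M) by auto.
        exists (Some (M/d - m/d)). intros n; split.
        -- intros Ln. pose proof (L_mod _ _ _ _ Ln) as Mn; fold d in Mn.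
           pose proof (Nat.div_mod_eq n d) as En.
           specialize (Hm _ Ln). specialize (HM _ Ln).
           exists (n/d - m/d).
           rewrite Mn, <- Mm in En. rewrite MM, <- Mm in EM.
           assert (m/d <= n/d) by nia. assert (n/d <= M/d) by nia.
           split. nia. lia.
        -- intros [k [-> Hk]].
           apply (L_conv e f a m M); auto.
           split. lia. rewrite MM, <- Mm in EM. nia.
           fold d. rewrite Nat.Div0.mod_add. auto.
      * exists None. intros n; split.
        -- intros Ln. pose proof (L_mod _ _ _ _ Ln) as Mn; fold d in Mn.
           pose proof (Nat.div_mod_eq n d) as En.
           specialize (Hm _ Ln).
           exists (n/d - m/d). rewrite Mn, <- Mm in En.
           assert (m/d <= n/d) by nia. split; auto. nia.
        -- intros [k [-> _]].
           assert (exists x, Lset e f a x /\ m + k * d <= x) as [x [Lx Hx]].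
           { apply NNPP; intros C; apply HB; exists (m + k*d).
             intros x Lx. destruct (le_lt_dec x (m + k*d)); auto.
             exfalso; apply C; exists x; split; auto; lia. }
           apply (L_conv e f a m x); auto. lia.
           fold d. rewrite Nat.Div0.mod_add. auto.
Qed.
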